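(* Let $n\geq1$. The monoid $M_n$ is right-cancellative and admits conditional left-lcms: any two elements of $M_n$ that admit a common left-multiple admit a left-lcm. (Equivalently, the opposite monoid $M_n^{\mathrm{op}}$ is left-cancellative and admits conditional right-lcms.)
   Context: $M_n$ denotes the monoid with generators $\rho_1,\dots,\rho_n$ and relations $\rho_1\rho_n\rho_i=\rho_{i+1}\rho_n$ for $1\leq i\leq n-1$. $c$ is a left-multiple of $a$ if $c=ba$ for some $b$. A left-lcm of $a,b$ is a common left-multiple of $a$ and $b$ that right-divides every common left-multiple of $a$ and $b$. *)

(* Defs.v *)
From mathcomp Require Import all_boot.
Set Implicit Arguments. Unset Strict Implicit. Unset Printing Implicit Defensive.

(* Elements of M_n are represented by words over the alphabet {1,...,n};
   the letter i stands for the generator rho_i.  Concatenation is the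
   monoid product, [::] the identity. *)
Definition Mword (n : nat) (w : seq nat) : bool := all (fun a => 0 < a <= n) w.

Inductive Mcong (n : nat) : seq nat -> seq nat -> Prop :=
| Mcong_refl w : Mcong n w w
| Mcong_sym u v : Mcong n u v -> Mcong n v u
| Mcong_trans u v w : Mcong n u v -> Mcong n v w -> Mcong n u w
| Mcong_rel (u v : seq nat) (i : nat) : 1 <= i <= n - 1 ->
    Mcong n (u ++ [:: 1; n; i] ++ v) (u ++ [:: i.+1; n] ++ v).

Definition Mleft_multiple (n : nat) (c a : seq nat) : Prop :=
  exists b, Mword n b /\ Mcong n c (b ++ a).

Definition Mleft_lcm (n : nat) (m a b : seq nat) : Prop :=
  Mleft_multiple n m a /\ Mleft_multiple n m b /\
  forall c, Mword n c -> Mleft_multiple n c a -> Mleft_multiple n c b ->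
    Mleft_multiple n c m.

(* Main.v *)
Require Import Defs.
From Stdlib Require Import Relations.
From mathcomp Require Import all_boot zify.
Set Implicit Arguments. Unset Strict Implicit. Unset Printing Implicit Defensive.

Fixpoint onen (n k : nat) : seq nat :=
  if k is k'.+1 then [:: 1, n & onen n k'] else [::].

Lemma onen_rcons n k : onen n k ++ [:: 1; n] = onen n k.+1.
Proof. by elim: k => //= k ->. Qed.

Lemma Mcong_ctx n p x y q : Mcong n x y -> Mcong n (p ++ x ++ q) (p ++ y ++ q).
Proof.
elim=> [w|u v _ IH|u v w _ IH1 _ IH2|u v i Hi].
- exact: Mcong_refl.
- exact: Mcong_sym.
- exact: Mcong_trans IH1 IH2.
- have -> : p ++ (u ++ [:: 1; n; i] ++ v) ++ q = (p ++ u) ++ [:: 1; n; i] ++ (v ++ q)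
    by rewrite !catA.
  have -> : p ++ (u ++ [:: i.+1; n] ++ v) ++ q = (p ++ u) ++ [:: i.+1; n] ++ (v ++ q)
    by rewrite !catA.
  exact: Mcong_rel.
Qed.

Lemma Mcong_cat n x x' y y' : Mcong n x x' -> Mcong n y y' -> Mcong n (x ++ y) (x' ++ y').
Proof.
move=> H1 H2; apply: (@Mcong_trans _ _ (x' ++ y)).
- by have := @Mcong_ctx n [::] x x' y H1.
- by have := @Mcong_ctx n x' y y' [::] H2; rewrite !cats0.
Qed.

Lemma Mcong_catr n x y c : Mcong n x y -> Mcong n (x ++ c) (y ++ c).
Proof. by move=> H; apply: Mcong_cat H (Mcong_refl _ _). Qed.

Lemma Mcong_catl n x y c : Mcong n x y -> Mcong n (c ++ x) (c ++ y).
Proof. by move=> H; apply: Mcong_cat (Mcong_refl _ _) H. Qed.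

Lemma Mcong_cons n a x y : Mcong n x y -> Mcong n (a :: x) (a :: y).
Proof. exact: (@Mcong_catl n x y [:: a]). Qed.

Lemma Mcong_wt n x y : Mcong n x y -> sumn x = sumn y.
Proof.
elim=> [w|u v _ ->|u v w _ -> _ ->|u v i _] //.
rewrite !sumn_cat /=; lia.
Qed.

Lemma Mcong_Mword n x y : Mcong n x y -> Mword n x = Mword n y.
Proof.
elim=> [w|u v _ ->|u v w _ -> _ ->|u v i Hi] //.
rewrite /Mword !all_cat /=.
have -> : (0 < i <= n) = true by apply/idP; lia.
have -> : (i < n) = true by apply/idP; lia.
have -> : (0 < n) = true by apply/idP; lia.
by [].
Qed.

Lemma MwordC n x y : Mword n (x ++ y) = Mword n x && Mword n y.
Proof. by rewrite /Mword all_cat. Qed.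

Lemma MwordR n x a : Mword n (rcons x a) = Mword n x && (0 < a <= n).
Proof. by rewrite /Mword all_rcons andbC. Qed.

Definition F' n s t :=
  if s < t then onen n (n - t) else (t + (n - s)).+1 :: onen n (n - s).-1.
Definition G n s t :=
  if s == n then [:: t.+1] else if t == n then [:: 1; n] else F' n s t ++ [:: 1; n].
Definition Rel n s t u v :=
  if s == t then Mcong n u v
  else exists w, Mcong n u (w ++ G n s t) /\ Mcong n v (w ++ G n t s).

Lemma push n m a : 0 < a -> a + m <= n ->
  Mcong n (onen n m ++ [:: a]) ((a + m) :: nseq m n).
Proof.
elim: m => [|m IH] Ha Ham /=; first by rewrite addn0; exact: Mcong_refl.
apply: (@Mcong_trans _ _ [:: 1, n, a + m & nseq m n]).
- apply: Mcong_cons; apply: Mcong_cons; apply: IH => //; lia.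
- have H : 1 <= a + m <= n - 1 by lia.
  rewrite addnS; exact: (@Mcong_rel n [::] (nseq m n) (a + m) H).
Qed.

Lemma I1lt n i j : 0 < i -> i < j -> j < n ->
  Mcong n (F' n i j ++ [:: i.+1]) (F' n j i ++ [:: j.+1]).
Proof.
move=> Hi ij jn; rewrite /F' ij.
have -> : (j < i) = false by apply/negbTE; rewrite -leqNgt ltnW.
have [k Hk] : exists k, n - j = k.+1 by exists (n - j).-1; lia.
rewrite Hk.
apply: (@Mcong_trans _ _ ((i.+1 + k.+1) :: nseq k.+1 n)).
- apply: push; lia.
- apply: Mcong_sym; rewrite /=.
  apply: (@Mcong_trans _ _ ((i + k.+1).+1 :: (j.+1 + k) :: nseq k n)).
  + apply: Mcong_cons; apply: push; lia.
  + have -> : j.+1 + k = n by lia.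
    rewrite addSn; exact: Mcong_refl.
Qed.

Lemma I1 n i j : 0 < i < n -> 0 < j < n -> i != j ->
  Mcong n (F' n i j ++ [:: i.+1]) (F' n j i ++ [:: j.+1]).
Proof.
move=> /andP[Hi Hin] /andP[Hj Hjn] Hne.
case: (ltngtP i j) => [ij|ji|e]; last by rewrite e eqxx in Hne.
- exact: I1lt.
- apply: Mcong_sym; exact: I1lt.
Qed.

Lemma Glcm n s t : 0 < s <= n -> 0 < t <= n -> s != t ->
  Mcong n (G n s t ++ [:: s]) (G n t s ++ [:: t]).
Proof.
move=> Hs Ht Hne; rewrite /G.
case: (eqVneq s n) => [Esn|Nsn].
- subst s; have Etn : (t == n) = false by rewrite eq_sym; exact: negbTE.
  rewrite Etn /=.
  apply: Mcong_sym.
  have H : 1 <= t <= n - 1 by move: Hne; rewrite eq_sym => /eqP; lia.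
  exact: (@Mcong_rel n [::] [::] t H).
case: (eqVneq t n) => [Etn|Ntn].
- subst t; rewrite /=.
  have H : 1 <= s <= n - 1 by move: Nsn => /eqP; lia.
  exact: (@Mcong_rel n [::] [::] s H).
have H1 : forall a b, 0 < a <= n -> a != n ->
    Mcong n ((F' n a b ++ [:: 1; n]) ++ [:: a]) ((F' n a b ++ [:: a.+1]) ++ [:: n]).
  move=> a b Ha Nan; rewrite -!catA.
  have H : 1 <= a <= n - 1 by move: Nan => /eqP; lia.
  exact: (@Mcong_rel n (F' n a b) [::] a H).
apply: Mcong_trans (H1 s t Hs Nsn) _.
apply: Mcong_sym; apply: Mcong_trans (H1 t s Ht Ntn) _.
apply: Mcong_catr; apply: Mcong_sym; apply: I1 => //.
- by move: Nsn => /eqP; lia.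
- by move: Ntn => /eqP; lia.
Qed.

Lemma Gshift n a b : 0 < a < n -> 0 < b < n -> a != b ->
  G n a.+1 b.+1 ++ [:: 1; n] = G n a b.
Proof.
move=> Ha Hb Hne; rewrite /G.
have -> : (a == n) = false by apply/eqP; lia.
have -> : (b == n) = false by apply/eqP; lia.
case: (eqVneq a.+1 n) => [Ean|Nan].
- have ba : b < a by move: Hne => /eqP; lia.
  rewrite /F' ltnNge (ltnW ba) /=.
  have -> : n - a = 1 by lia.
  by have -> : b + 1 = b.+1 by lia.
case: (eqVneq b.+1 n) => [Ebn|Nbn].
- have ab : a < b by move: Hne => /eqP; lia.
  rewrite /F' ab /=.
  by have -> : n - b = 1 by lia.
congr (_ ++ _); rewrite /F' ltnS.
case: ltnP => Hab.
- rewrite onen_rcons; congr onen; lia.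
- rewrite /= onen_rcons.
  have -> : b.+1 + (n - a.+1) = b + (n - a) by lia.
  congr (_ :: onen _ _); lia.
Qed.

Lemma Mword_onen n k : 0 < n -> Mword n (onen n k).
Proof. by move=> Hn; elim: k => //= k ->; rewrite Hn leqnn. Qed.

Lemma Mword_G n s t : 0 < s <= n -> 0 < t <= n -> s != t -> Mword n (G n s t).
Proof.
move=> Hs Ht Hne; have Hn : 0 < n by lia.
rewrite /G; case: (eqVneq s n) => [Esn|Nsn].
- rewrite /Mword /= andbT; move: Hne; rewrite Esn => /eqP; lia.
case: (eqVneq t n) => [Etn|Ntn].
- by rewrite /Mword /= Hn leqnn.
rewrite MwordC /F'; apply/andP; split; last by rewrite /Mword /= Hn leqnn.
case: ltnP => Hts; first exact: Mword_onen.
rewrite /Mword /=; apply/andP; split; last exact: Mword_onen.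
move: Nsn Ntn Hne Hts => /eqP ? /eqP ? /eqP ? ?; lia.
Qed.

Definition step n (x y : seq nat) := exists u v i, 1 <= i <= n - 1 /\
  x = u ++ [:: 1; n; i] ++ v /\ y = u ++ [:: i.+1; n] ++ v.

Lemma Mcong_rst n x y : Mcong n x y -> clos_refl_sym_trans_n1 _ (step n) x y.
Proof.
move=> H; apply/clos_rst_rstn1_iff.
elim: H => [w|u v _ IH|u v w _ IH1 _ IH2|u v i Hi].
- exact: rst_refl.
- exact: rst_sym.
- exact: rst_trans IH1 IH2.
- apply: rst_step; by exists u, v, i.
Qed.

Lemma rst_Mcong n x y : clos_refl_sym_trans_n1 _ (step n) x y -> Mcong n x y.
Proof.
elim=> [|y' z Hs _ IH]; first exact: Mcong_refl.
apply: Mcong_trans IH _.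
case: Hs => [[u [v [i [Hi [-> ->]]]]]|[u [v [i [Hi [-> ->]]]]]].
- exact: Mcong_rel.
- apply: Mcong_sym; exact: Mcong_rel.
Qed.

Lemma step_last n v' t' Y : step n (rcons v' t') Y ->
  (exists p i, 1 <= i <= n - 1 /\ v' = p ++ [:: 1; n] /\ t' = i /\
      Y = rcons (p ++ [:: i.+1]) n) \/
  (exists v, Y = rcons v t' /\ step n v' v).
Proof.
case=> u [w] [i] [Hi [Hx ->]].
case/lastP: w Hx => [|w z] Hx.
- left; exists u, i.
  have : rcons v' t' = rcons (u ++ [:: 1; n]) i.
    by rewrite Hx cats0 -cats1 -catA.
  case/rcons_inj => -> ->; split => //; split => //; split => //.
  by rewrite cats0 -cats1 -catA.
- right.
  move: Hx; rewrite -!rcons_cat => /rcons_inj [-> ->].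
  exists (u ++ [:: i.+1; n] ++ w); split => //.
  by exists u, w, i.
Qed.

Lemma Rel_cong n s t u v v' : Rel n s t u v' -> Mcong n v' v -> Rel n s t u v.
Proof.
rewrite /Rel; case: ifP => _.
- by move=> H1 H2; apply: Mcong_trans H1 H2.
- case=> w [H1 H2] H3; exists w; split => //.
  by apply: Mcong_trans (Mcong_sym H3) H2.
Qed.

Definition QH n N := forall u s v t, sumn (rcons u s) < N -> Mword n (rcons u s) ->
  Mcong n (rcons u s) (rcons v t) -> Rel n s t u v.

Lemma canc_gen n N : QH n N -> forall c a b, sumn (a ++ c) < N -> Mword n (a ++ c) ->
  Mcong n (a ++ c) (b ++ c) -> Mcong n a b.
Proof.
move=> IH; elim/last_ind => [|c z IHc] a b.
- by rewrite !cats0.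
- rewrite -!rcons_cat => h1 h2 h3.
  have := IH _ _ _ _ h1 h2 h3; rewrite /Rel eqxx => h4.
  apply: IHc h4.
  + by move: h1; rewrite sumn_rcons; lia.
  + by move: h2; rewrite MwordR => /andP[].
Qed.

Lemma step_Mcong n x y : step n x y -> Mcong n x y.
Proof. by case=> u [v [i [Hi [-> ->]]]]; exact: Mcong_rel. Qed.

Lemma C1 n N u s p i : QH n N -> sumn (rcons (p ++ [:: 1; n]) i) <= N ->
  Mword n (rcons (p ++ [:: 1; n]) i) -> 1 <= i <= n - 1 -> 0 < s <= n ->
  Rel n s i u (p ++ [:: 1; n]) -> Rel n s n u (p ++ [:: i.+1]).
Proof.
move=> IH hN hW Hi Hs.
have canc := canc_gen IH.
have hW' : Mword n (p ++ [:: 1; n]) by move: hW; rewrite MwordR => /andP[].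
have hN' : sumn (p ++ [:: 1; n]) < N by move: hN; rewrite sumn_rcons; lia.
have Nin : (i == n) = false by apply/eqP; lia.
rewrite /Rel.
case: (eqVneq s i) => [->|Nsi].
- rewrite Nin => H; exists p; rewrite /G Nin eqxx; split => //; exact: Mcong_refl.
case: (eqVneq s n) => [Esn|Nsn].
- subst s; case=> w [H1 H2]; rewrite /G eqxx Nin in H1 H2.
  have Hpw := canc [:: 1; n] p w hN' hW' H2.
  apply: Mcong_trans H1 _; apply: Mcong_catr; exact: Mcong_sym.
case=> w [H1 H2]; rewrite /G (negbTE Nsn) Nin in H1 H2.
have Hp : Mcong n p (w ++ F' n i s).
  by apply: (canc [:: 1; n]) => //; rewrite -catA.
exists (w ++ F' n s i); rewrite /G (negbTE Nsn) eqxx; split.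
- by rewrite -catA.
- apply: (@Mcong_trans _ _ (w ++ F' n i s ++ [:: i.+1])).
  + rewrite catA; exact: Mcong_catr.
  + rewrite -catA; apply: Mcong_catl; apply: I1.
    * lia.
    * by move: Nsn => /eqP; lia.
    * by rewrite eq_sym.
Qed.

Lemma C2 n N u s p i : QH n N -> sumn (rcons (p ++ [:: i.+1]) n) <= N ->
  Mword n (rcons (p ++ [:: i.+1]) n) -> 1 <= i <= n - 1 -> 0 < s <= n ->
  Rel n s n u (p ++ [:: i.+1]) -> Rel n s i u (p ++ [:: 1; n]).
Proof.
move=> IH hN hW Hi Hs.
have canc := canc_gen IH.
have hW' : Mword n (p ++ [:: i.+1]) by move: hW; rewrite MwordR => /andP[].
have hN' : sumn (p ++ [:: i.+1]) < N by move: hN; rewrite sumn_rcons; lia.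
have Nin : (i == n) = false by apply/eqP; lia.
have Nni : (n == i) = false by apply/eqP; lia.
rewrite /Rel.
case: (eqVneq s n) => [->|Nsn].
- rewrite Nni => H; exists p; rewrite /G eqxx Nin; split => //; exact: Mcong_refl.
case: (eqVneq s i) => [Esi|Nsi].
- subst s; case=> w [H1 H2]; rewrite /G eqxx Nin in H1 H2.
  have Hpw := canc [:: i.+1] p w hN' hW' H2.
  apply: Mcong_trans H1 _; apply: Mcong_catr; exact: Mcong_sym.
case=> w [H1 H2]; rewrite /G (negbTE Nsn) eqxx in H1 H2.
have R : Rel n s.+1 i.+1 w p.
  apply: IH.
  - by rewrite -cats1 -(Mcong_wt H2).
  - by rewrite -cats1 -(Mcong_Mword H2).
  - by rewrite -!cats1; exact: Mcong_sym H2.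
rewrite /Rel eqSS (negbTE Nsi) in R; case: R => w' [R1 R2].
have Hs' : 0 < s < n by move: Nsn => /eqP; lia.
have Hi' : 0 < i < n by lia.
exists w'; split.
- apply: Mcong_trans H1 _; rewrite -(Gshift Hs' Hi' Nsi) catA; exact: Mcong_catr R1.
- rewrite -(Gshift Hi' Hs' _) ?catA; last by rewrite eq_sym.
  exact: Mcong_catr R2.
Qed.

Lemma Qmain n N : QH n N.
Proof.
elim: N => [|N IH] u s v t HN Hw Hc; first by [].
have Hs : 0 < s <= n by move: Hw; rewrite MwordR => /andP[].
move/Mcong_rst: Hc.
move Ev: (rcons v t) => Y HY.
elim: HY v t Ev => [|Y' Z Hst HY' IHY] v t Ev.
- case/rcons_inj: Ev => <- <-; rewrite /Rel eqxx; exact: Mcong_refl.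
- have HcY' := rst_Mcong HY'.
  have wY' := Mcong_wt HcY'. have mY' := Mcong_Mword HcY'.
  case/lastP: Y' Hst HY' IHY HcY' wY' mY' => [|v' t'] Hst HY' IHY HcY' wY' mY'.
  + by move: wY'; rewrite sumn_rcons /=; lia.
  have R' := IHY v' t' erefl.
  have hN : sumn (rcons v' t') <= N by rewrite -wY'.
  have hW : Mword n (rcons v' t') by rewrite -mY'.
  subst Z.
  case: Hst => Hst.
  + case: (step_last Hst) => [[p [i [Hi [Ev' [Et' EY]]]]]|[v0 [EY Hst']]].
    * subst v' t'; case/rcons_inj: EY => -> ->; exact: (C1 IH hN hW Hi Hs R').
    * case/rcons_inj: EY => -> ->; apply: Rel_cong R' _; exact: step_Mcong.
  + case: (step_last Hst) => [[p [i [Hi [Ev' [Et' EY]]]]]|[v0 [EY Hst']]].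
    * subst v t; case/rcons_inj: EY => Ev' Et'; subst v' t'.
      exact: (C2 IH hN hW Hi Hs R').
    * case/rcons_inj: EY => Ev' Et'; subst v' t'.
      apply: Rel_cong R' _; apply: Mcong_sym; exact: step_Mcong.
Qed.

Lemma Rcanc n a b c : Mword n a -> Mword n c -> Mcong n (a ++ c) (b ++ c) -> Mcong n a b.
Proof.
move=> Ha Hc H.
have Hw : Mword n (a ++ c) by rewrite MwordC Ha Hc.
exact: (canc_gen (@Qmain n (sumn (a ++ c)).+1) (ltnSn _) Hw H).
Qed.

Lemma QQ n u s v t : Mword n (rcons u s) -> Mcong n (rcons u s) (rcons v t) -> Rel n s t u v.
Proof. exact: (Qmain (N := (sumn (rcons u s)).+1)). Qed.

Lemma lcm_main n N : forall a b c, sumn c < N -> Mword n a -> Mword n b -> Mword n c ->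
  Mleft_multiple n c a -> Mleft_multiple n c b ->
  exists m, Mword n m /\ Mleft_lcm n m a b.
Proof.
elim: N => [//|N IH] a b c Hc Ha Hb Hcw.
case/lastP: a Ha => [|a' s] Ha.
  move=> _ _; exists b; split => //; split.
    by exists b; rewrite cats0; split => //; exact: Mcong_refl.
  split; first by exists [::]; split => //; exact: Mcong_refl.
  by move=> c' _ _ H.
case/lastP: b Hb => [|b' t] Hb.
  move=> _ _; exists (rcons a' s); split => //; split.
    by exists [::]; split => //; exact: Mcong_refl.
  split; first by exists (rcons a' s); rewrite cats0; split => //; exact: Mcong_refl.
  by move=> c' _ H _.
case=> x [Hx Hcx] [y [Hy Hcy]].
have Hxy : Mcong n (rcons (x ++ a') s) (rcons (y ++ b') t).
  by rewrite !rcons_cat; apply: Mcong_trans (Mcong_sym Hcx) Hcy.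
have Hxa : Mword n (rcons (x ++ a') s) by rewrite rcons_cat -(Mcong_Mword Hcx).
have Hyb : Mword n (rcons (y ++ b') t) by rewrite rcons_cat -(Mcong_Mword Hcy).
move: (Ha) (Hb) (Hxa) (Hyb); rewrite !MwordR => /andP[Ha' Hs] /andP[Hb' Ht]
  /andP[Hxa' _] /andP[Hyb' _].
have wx : sumn (x ++ a') < N.
  by move: Hc; rewrite (Mcong_wt Hcx) -rcons_cat sumn_rcons; lia.
have wy : sumn (y ++ b') < N.
  by move: Hc; rewrite (Mcong_wt Hcy) -rcons_cat sumn_rcons; lia.
have R := QQ Hxa Hxy; rewrite /Rel in R.
case: (eqVneq s t) R => [Est|Nst] R.
  subst t.
  have [m' [Hm' [[al [Hal Hma]] [[be [Hbe Hmb]] Hmin]]]] :=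
    IH a' b' (x ++ a') wx Ha' Hb' Hxa' (ex_intro _ x (conj Hx (Mcong_refl _ _)))
      (ex_intro _ y (conj Hy R)).
  exists (rcons m' s); split; first by rewrite MwordR Hm' Hs.
  split; [|split].
  - exists al; split => //; rewrite -!cats1 catA; exact: Mcong_catr.
  - exists be; split => //; rewrite -!cats1 catA; exact: Mcong_catr.
  - move=> c' Hc' [x' [Hx' H1]] [y' [Hy' H2]].
    have H12 : Mcong n (rcons (x' ++ a') s) (rcons (y' ++ b') s).
      by rewrite !rcons_cat; apply: Mcong_trans (Mcong_sym H1) H2.
    have Hm1 : Mword n (rcons (x' ++ a') s) by rewrite rcons_cat -(Mcong_Mword H1).
    have := QQ Hm1 H12; rewrite /Rel eqxx => H3.
    have Hm1' : Mword n (x' ++ a') by move: Hm1; rewrite MwordR => /andP[].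
    have [z [Hz Hz']] := Hmin (x' ++ a') Hm1' (ex_intro _ x' (conj Hx' (Mcong_refl _ _)))
      (ex_intro _ y' (conj Hy' H3)).
    exists z; split => //; apply: Mcong_trans H1 _.
    rewrite -!cats1 !catA; exact: Mcong_catr.
case: R => w [Rw1 Rw2].
have Hs' : 0 < s <= n by [].
have Hw : Mword n w by move: Hxa'; rewrite (Mcong_Mword Rw1) MwordC => /andP[].
have HG := Mword_G Hs Ht Nst.
have Nts : t != s by rewrite eq_sym.
have HG' := Mword_G Ht Hs Nts.
have [m1 [Hm1 [[al [Hal H1a]] [[be [Hbe H1b]] Hmin1]]]] :=
  IH a' (G n s t) (x ++ a') wx Ha' HG Hxa' (ex_intro _ x (conj Hx (Mcong_refl _ _)))
    (ex_intro _ w (conj Hw Rw1)).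
have Hbeta : Mword n be by move: Hm1; rewrite (Mcong_Mword H1b) MwordC => /andP[].
have key : forall x' y' w', Mword n w' -> Mword n (x' ++ a') ->
    Mcong n (x' ++ a') (w' ++ G n s t) -> Mcong n (y' ++ b') (w' ++ G n t s) ->
    exists ga, Mword n ga /\ Mcong n (y' ++ b') (ga ++ (be ++ G n t s)).
  move=> x' y' w' Hw' Hxw W1 W2.
  have Hx'w : Mword n x' by move: Hxw; rewrite MwordC => /andP[].
  have [ga [Hga Hg]] := Hmin1 (x' ++ a') Hxw (ex_intro _ x' (conj Hx'w (Mcong_refl _ _)))
    (ex_intro _ w' (conj Hw' W1)).
  exists ga; split => //.
  have Hwg : Mcong n w' (ga ++ be).
    apply: (Rcanc Hw' HG).
    apply: Mcong_trans (Mcong_sym W1) _; apply: Mcong_trans Hg _.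
    rewrite -catA; exact: Mcong_catl.
  apply: Mcong_trans W2 _; rewrite catA; exact: Mcong_catr.
have [ga [Hga Hyb2]] := key x y w Hw Hxa' Rw1 Rw2.
have Hbg : Mword n (be ++ G n t s) by rewrite MwordC Hbeta HG'.
have [m2 [Hm2 [[de [Hde H2a]] [[ep [Hep H2b]] Hmin2]]]] :=
  IH (be ++ G n t s) b' (y ++ b') wy Hbg Hb' Hyb' (ex_intro _ ga (conj Hga Hyb2))
    (ex_intro _ y (conj Hy (Mcong_refl _ _))).
exists (rcons m2 t); split; first by rewrite MwordR Hm2 Ht.
split; [|split].
- exists (de ++ al); split; first by rewrite MwordC Hde Hal.
  apply: (@Mcong_trans _ _ ((de ++ be) ++ (G n t s ++ [:: t]))).
    rewrite -cats1 !catA; apply: Mcong_catr; by rewrite -catA.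
  apply: (@Mcong_trans _ _ ((de ++ be) ++ (G n s t ++ [:: s]))).
    apply: Mcong_catl; apply: Mcong_sym; exact: Glcm.
  apply: (@Mcong_trans _ _ ((de ++ m1) ++ [:: s])).
    rewrite !catA; apply: Mcong_catr; rewrite -catA; apply: Mcong_catl; exact: Mcong_sym H1b.
  rewrite -cats1 !catA; apply: Mcong_catr; rewrite -catA; apply: Mcong_catl; exact: H1a.
- exists ep; split => //; rewrite -!cats1 catA; exact: Mcong_catr.
- move=> c' Hc' [x' [Hx' H1]] [y' [Hy' H2]].
  have H12 : Mcong n (rcons (x' ++ a') s) (rcons (y' ++ b') t).
    by rewrite !rcons_cat; apply: Mcong_trans (Mcong_sym H1) H2.
  have Hm1' : Mword n (rcons (x' ++ a') s) by rewrite rcons_cat -(Mcong_Mword H1).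
  have Hm2' : Mword n (rcons (y' ++ b') t) by rewrite rcons_cat -(Mcong_Mword H2).
  move: (Hm1') (Hm2'); rewrite !MwordR => /andP[Hxw _] /andP[Hyw _].
  have := QQ Hm1' H12; rewrite /Rel (negbTE Nst) => -[w' [W1 W2]].
  have Hw' : Mword n w' by move: Hxw; rewrite (Mcong_Mword W1) MwordC => /andP[].
  have [ga' [Hga' Hyb3]] := key x' y' w' Hw' Hxw W1 W2.
  have [z [Hz Hz']] := Hmin2 (y' ++ b') Hyw (ex_intro _ ga' (conj Hga' Hyb3))
    (ex_intro _ y' (conj Hy' (Mcong_refl _ _))).
  exists z; split => //; apply: Mcong_trans H2 _.
  rewrite -!cats1 !catA; exact: Mcong_catr.
Qed.

Theorem proposition4p12 (n : nat) : 1 <= n ->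
  (* right-cancellativity *)
  (forall a b c : seq nat, Mword n a -> Mword n b -> Mword n c ->
     Mcong n (a ++ c) (b ++ c) -> Mcong n a b) /\
  (* conditional left-lcms *)
  (forall a b : seq nat, Mword n a -> Mword n b ->
     (exists c, Mword n c /\ Mleft_multiple n c a /\ Mleft_multiple n c b) ->
     exists m, Mword n m /\ Mleft_lcm n m a b).
Proof.
move=> Hn; split.
- move=> a b c Ha _ Hc H; exact: Rcanc Ha Hc H.
- move=> a b Ha Hb [c [Hc [H1 H2]]].
  exact: (@lcm_main n (sumn c).+1 a b c).
Qed.
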